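(* For every $\Delta\in(0,1)$, if $N\ge164k^2\ln(4R/\Delta)+\frac{100\ln(2/\Delta)}{1-\tau}$, then with probability at least $1-\Delta$, $1-\widehat\tau\ge\frac{1-\tau}{8}$.
   Context: Let $R\ge 2$ be an integer and $\rho=(\rho_1,\dots,\rho_R)$ a probability vector with $\rho_r>0$ for all $r$. Let $Y_1,\dots,Y_N$ be i.i.d. labels with $\mathbb P(Y_j=r)=\rho_r$, $N_r=|\{j:Y_j=r\}|$, $\widehat\rho_r=N_r/N$. Fix an integer $k\ge1$. Set $\tau:=1-\sum_{r}\rho_r(1-\rho_r)^k$ and $\widehat\tau:=1-\sum_r\widehat\rho_r(1-\widehat\rho_r)^k$. *)

(* Defs.v *)
From HB Require Import structures.
From mathcomp Require Import all_boot all_order all_algebra.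
From mathcomp Require Import all_classical all_reals all_analysis.
Set Implicit Arguments. Unset Strict Implicit. Unset Printing Implicit Defensive.
Import Order.TTheory GRing.Theory Num.Theory.
Local Open Scope ring_scope.

(* Labels take values in 'I_nR (classes 1..R of the paper are 0..R-1 here).
   A sample of size N is y : {ffun 'I_N -> 'I_nR}; under the i.i.d. law
   with class probabilities rho, its probability is prod_j rho (y j). *)

Definition sample_prob (R : realType) (nR N : nat) (rho : 'I_nR -> R)
  (y : {ffun 'I_N -> 'I_nR}) : R := \prod_(j < N) rho (y j).

Definition Prob (R : realType) (nR N : nat) (rho : 'I_nR -> R)
  (E : pred {ffun 'I_N -> 'I_nR}) : R :=
  \sum_(y : {ffun 'I_N -> 'I_nR} | E y) sample_prob rho y.

Definition count_class (nR N : nat) (y : {ffun 'I_N -> 'I_nR}) (r : 'I_nR) : nat :=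
  #|[set j : 'I_N | y j == r]|.

Definition rho_hat (R : realType) (nR N : nat) (y : {ffun 'I_N -> 'I_nR})
  (r : 'I_nR) : R := (count_class y r)%:R / N%:R.

Definition tau_of (R : realType) (nR : nat) (k : nat) (p : 'I_nR -> R) : R :=
  1 - \sum_(r < nR) p r * (1 - p r) ^+ k.

(* Main.v *)
Require Import Defs.
From HB Require Import structures.
From mathcomp Require Import all_boot all_order all_algebra.
From mathcomp Require Import all_classical all_reals all_analysis.
From mathcomp Require Import ring lra.
Import Order.TTheory GRing.Theory Num.Theory.
Local Open Scope ring_scope.

Lemma sample_prob_ge0 (R : realType) nR N (rho : 'I_nR -> R)
  (y : {ffun 'I_N -> 'I_nR}) : (forall r, 0 <= rho r) -> 0 <= sample_prob rho y.
Proof. by move=> h; rewrite /sample_prob; apply: prodr_ge0 => j _. Qed.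

Lemma sum_prod_ffun (R : realType) nR N (F : 'I_nR -> R) :
  \sum_(y : {ffun 'I_N -> 'I_nR}) \prod_(j < N) F (y j) = (\sum_r F r) ^+ N.
Proof.
rewrite -[in RHS](card_ord N) -prodr_const.
by rewrite (bigA_distr_bigA (fun (j : 'I_N) (r : 'I_nR) => F r)).
Qed.

Lemma prob_exp (R : realType) nR N (rho : 'I_nR -> R) (f : 'I_nR -> R) :
  (forall r, 0 <= rho r) ->
  Prob rho (fun y : {ffun 'I_N -> 'I_nR} => 0 <= \sum_(j < N) f (y j))
    <= (\sum_r rho r * expR (f r)) ^+ N.
Proof.
move=> h0; rewrite /Prob -sum_prod_ffun.
rewrite [X in _ <= X](bigID (fun y : {ffun 'I_N -> 'I_nR} => 0 <= \sum_(j < N) f (y j))) /=.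
rewrite -[X in X <= _]addr0; apply: lerD.
  apply: ler_sum => y hy.
  rewrite big_split /= -expR_sum /sample_prob.
  rewrite -[X in X <= _]mulr1; apply: ler_wpM2l.
    by apply: prodr_ge0 => j _.
  by rewrite -expR0 ler_expR.
apply: sumr_ge0 => y _; apply: prodr_ge0 => j _.
by apply: mulr_ge0 => //; apply: expR_ge0.
Qed.

Lemma prob_total (R : realType) nR N (rho : 'I_nR -> R) :
  \sum_r rho r = 1 ->
  \sum_(y : {ffun 'I_N -> 'I_nR}) sample_prob rho y = 1.
Proof. by move=> h; rewrite /sample_prob sum_prod_ffun h expr1n. Qed.
Lemma union_bound (R : realType) (T I : finType) (w : T -> R) (E A : pred T)
  (B : I -> pred T) :
  (forall y, 0 <= w y) -> (forall y, ~~ E y -> A y || [exists i, B i y]) ->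
  \sum_(y | ~~ E y) w y <= \sum_(y | A y) w y + \sum_i \sum_(y | B i y) w y.
Proof.
move=> w0 hE; rewrite (exchange_big_dep xpredT) //=.
rewrite [\sum_(y | A y) _]big_mkcond [\sum_(y | ~~ E y) _]big_mkcond -big_split /=.
apply: ler_sum => y _.
have hs : 0 <= \sum_(i | B i y) w y by apply: sumr_ge0.
case: (boolP (E y)) => hy /=.
  by apply: addr_ge0 => //; case: (A y).
move/hE: hy; case: (boolP (A y)) => hA /=.
  by rewrite lerDl.
case/existsP=> i hi; rewrite add0r (bigD1 i) //= lerDl.
by apply: sumr_ge0.
Qed.
Lemma expRNK {R : realType} (x : R) : expR (- x) * expR x = 1.
Proof. by rewrite -expRD addNr expR0. Qed.

Lemma expN_le (R : realType) (g : R) : 0 <= g <= 1 -> expR (- g) <= 1 - g / 2.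
Proof.
case/andP=> g0 g1.
have h1 := expR_ge1Dx g; have h2 := expRNK (R:=R) g; have h3 := expR_gt0 (- g).
set a := expR (- g) in h2 h3 *; set b := expR g in h1 h2 *.
have h4 : a * (1 + g) <= a * b by apply: ler_wpM2l => //; apply: ltW.
nra.
Qed.

Lemma expP_le (R : realType) (l : R) : 0 <= l < 1 -> expR l * (1 - l) <= 1.
Proof.
case/andP=> l0 l1.
have h1 := expR_ge1Dx (- l); have h2 := expRNK (R:=R) l; have h3 := expR_gt0 l.
set a := expR (- l) in h1 h2 *; set b := expR l in h2 h3 *.
have h4 : b * (1 - l) <= b * a by apply: ler_wpM2l; [apply: ltW | lra].
nra.
Qed.

Lemma chernoffA (R : realType) nR (rho g : 'I_nR -> R) (th : R) :
  (forall r, 0 <= rho r) -> \sum_r rho r = 1 -> (forall r, 0 <= g r <= 1) ->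
  \sum_r rho r * expR (th - g r) <= expR (th - (\sum_r rho r * g r) / 2).
Proof.
move=> r0 rs g01.
have -> : \sum_r rho r * expR (th - g r) = expR th * \sum_r rho r * expR (- g r).
  rewrite big_distrr /=; apply: eq_bigr => r _; rewrite expRD; ring.
rewrite expRD; apply: ler_wpM2l; first exact: expR_ge0.
apply: le_trans (expR_ge1Dx _).
have -> : 1 + - ((\sum_r rho r * g r) / 2) = \sum_r rho r * (1 - g r / 2).
  rewrite [RHS](eq_bigr (fun r => rho r - rho r * g r / 2)); last by move=> r _; ring.
  by rewrite sumrB rs -mulr_suml.
apply: ler_sum => r _; apply: ler_wpM2l => //; exact: expN_le.
Qed.

Lemma chernoffB (R : realType) nR (rho : 'I_nR -> R) (r : 'I_nR) (l e : R) :
  (forall r, 0 <= rho r) -> \sum_r rho r = 1 -> 0 <= l < 1 ->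
  \sum_s rho s * expR (l * ((s == r)%:R - rho r - e))
    <= expR (- (l * e) + l ^+ 2 / (1 - l)).
Proof.
move=> r0 rs /andP[l0 l1].
have rr1 : rho r <= 1.
  rewrite -rs (bigD1 r) //= lerDl; exact: sumr_ge0.
have -> : \sum_s rho s * expR (l * ((s == r)%:R - rho r - e))
   = expR (- (l * (rho r + e))) * (1 + rho r * (expR l - 1)).
  have -> : \sum_s rho s * expR (l * ((s == r)%:R - rho r - e))
     = expR (- (l * (rho r + e))) * \sum_s rho s * expR (l * (s == r)%:R).
    rewrite big_distrr /=; apply: eq_bigr => s _.
    rewrite -[expR (l * (_ == _)%:R)]/(expR (l * (s == r)%:R)) mulrCA -expRD; congr (_ * expR _); ring.
  congr (_ * _); rewrite (bigD1 r) //= eqxx mulr1.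
  have -> : \sum_(s < nR | s != r) rho s * expR (l * (s == r)%:R) = \sum_(s < nR | s != r) rho s.
    by apply: eq_bigr => s /negbTE ->; rewrite mulr0 expR0 mulr1.
  have : \sum_s rho s = rho r + \sum_(s < nR | s != r) rho s by rewrite (bigD1 r).
  rewrite rs => h; lra.
have hl' : expR l * (1 - l) <= 1 by apply: expP_le; lra.
have e1 : expR l - 1 <= l / (1 - l).
  rewrite ler_pdivlMr; last lra.
  lra.
apply: le_trans (_ : expR (- (l * (rho r + e))) * expR (rho r * (expR l - 1)) <= _).
  apply: ler_wpM2l; first exact: expR_ge0.
  exact: expR_ge1Dx.
rewrite -expRD ler_expR.
have : rho r * (expR l - 1) <= rho r * (l / (1 - l)) by apply: ler_wpM2l.
have h5 : rho r * (l / (1 - l)) - rho r * l <= l ^+ 2 / (1 - l).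
  have -> : rho r * (l / (1 - l)) - rho r * l = rho r * (l ^+ 2 / (1 - l)).
    field; lra.
  rewrite -[X in _ <= X]mul1r; apply: ler_wpM2r => //.
  apply: divr_ge0; [exact: sqr_ge0 | lra].
lra.
Qed.
Lemma pow_le (R : realType) (a b : R) n : 0 <= a -> a <= b -> a ^+ n <= b ^+ n.
Proof. by move=> a0 ab; apply: lerXn2r; rewrite // nnegrE // (le_trans a0 ab). Qed.

Lemma bernoulli_le (R : realType) (u : R) k : 0 <= u <= 1 -> 1 - k%:R * u <= (1 - u) ^+ k.
Proof.
case/andP=> u0 u1; elim: k => [|k IH]; first by rewrite expr0 mul0r subr0.
rewrite exprS -natr1.
have h : (1 - u) * (1 - k%:R * u) <= (1 - u) * (1 - u) ^+ k by apply: ler_wpM2l; lra.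
have hk : 0 <= k%:R :> R by [].
nra.
Qed.

Lemma exists_max (R : realType) nR (rho : 'I_nR -> R) :
  (0 < nR)%N -> exists r0, forall r, rho r <= rho r0.
Proof.
move=> hn; pose i0 := Ordinal hn.
case: (@arg_maxP _ _ _ i0 xpredT rho isT) => r0 _ h.
by exists r0 => r; apply: h.
Qed.

Lemma pair_le1 (R : realType) nR (rho : 'I_nR -> R) r s :
  (forall r, 0 <= rho r) -> \sum_r rho r = 1 -> r != s -> rho r + rho s <= 1.
Proof.
move=> h0 hs rs; rewrite -hs (bigD1 r) //= (bigD1 s) /=; last by rewrite eq_sym.
rewrite addrA lerDl; exact: sumr_ge0.
Qed.
Lemma sum_count {R : realType} {nR N} (y : {ffun 'I_N -> 'I_nR}) (g : 'I_nR -> R) :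
  \sum_(j < N) g (y j) = \sum_r (count_class y r)%:R * g r.
Proof.
rewrite (partition_big y xpredT) //=; apply: eq_bigr => r _.
rewrite /count_class mulr_natl -sumr_const.
rewrite (eq_bigr (fun _ => g r)); last by move=> j /eqP ->.
by apply: eq_bigl => j; rewrite inE.
Qed.

Lemma count_le (nR N : nat) (y : {ffun 'I_N -> 'I_nR}) r : (count_class y r <= N)%N.
Proof. by rewrite /count_class -[X in (_ <= X)%N](card_ord N) max_card. Qed.

Lemma sum_ind (R : realType) nR N (y : {ffun 'I_N -> 'I_nR}) r :
  \sum_(j < N) ((y j == r)%:R : R) = (count_class y r)%:R.
Proof.
rewrite (sum_count y (fun s => ((s == r)%:R : R))) (bigD1 r) //= eqxx mulr1.
rewrite big1 ?addr0 // => s /negbTE ->; by rewrite mulr0.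
Qed.

Lemma eN (R : numFieldType) N (x : R) : \sum_(j < N) x = x * N%:R.
Proof. by rewrite sumr_const card_ord mulr_natr. Qed.

Lemma det_step (R : realType) nR N (rho : 'I_nR -> R) k r0 (y : {ffun 'I_N -> 'I_nR}) (th : R) :
  (forall r, 0 <= rho r) -> \sum_r rho r = 1 -> (forall r, rho r <= rho r0) ->
  (1 <= k)%N -> (0 < N)%N ->
  \sum_(j < N) (th - (if y j == r0 then 0 else (1 - rho (y j)) ^+ k)) < 0 ->
  (forall r, r != r0 -> \sum_(j < N) (1 / (10 * k%:R)) * (((y j == r)%:R : R) - rho r - 1 / (5 * k%:R)) < 0) ->
  3 / 5 * th <= \sum_r rho_hat R y r * (1 - rho_hat R y r) ^+ k.
Proof.
move=> h0 hs hmax k1 N0 hA hB.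
have Nr : (0 : R) < N%:R by rewrite ltr0n.
have kr : (1 : R) <= k%:R by rewrite ler1n.
set g := fun r => if r == r0 then 0 else (1 - rho r) ^+ k.
have hA' : th < \sum_r rho_hat R y r * g r.
  move: hA; rewrite sumrB eN (sum_count y g) subr_lt0 => h.
  have -> : \sum_r rho_hat R y r * g r = (\sum_r (count_class y r)%:R * g r) / N%:R.
    by rewrite mulr_suml; apply: eq_bigr => r _; rewrite /rho_hat mulrAC.
  by rewrite ltr_pdivlMr.
have hB' : forall r, r != r0 -> rho_hat R y r < rho r + 1 / (5 * k%:R).
  move=> r nr; have := hB r nr; rewrite -mulr_sumr pmulr_rlt0; last by apply: divr_gt0; lra.
  rewrite sumrB sumrB !eN sum_ind /rho_hat ltr_pdivrMr // => h.
  lra.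
have rh01 : forall r, 0 <= rho_hat R y r <= 1.
  move=> r; rewrite /rho_hat; apply/andP; split; first by apply: divr_ge0.
  rewrite ler_pdivrMr // mul1r ler_nat; exact: count_le.
apply: le_trans (_ : 3 / 5 * \sum_r rho_hat R y r * g r <= _).
  apply: ler_wpM2l; [lra | exact: ltW].
rewrite mulr_sumr; apply: ler_sum => r _.
have [h1 h2] := andP (rh01 r).
rewrite /g; case: (eqVneq r r0) => [->|nr].
  have [h1x h2x] := andP (rh01 r0).
  rewrite mulr0 mulr0; apply: mulr_ge0 => //; apply: exprn_ge0; lra.
have p1 := @pair_le1 R nR rho r r0 h0 hs nr; have p2 := hmax r; have p3 := h0 r0; have p4 := h0 r.
have rhalf : rho r <= 1 / 2 by lra.
pose e : R := 1 / (5 * k%:R).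
have e0 : 0 < e by rewrite /e; apply: divr_gt0; lra.
have ke : k%:R * e = 1 / 5 by rewrite /e; field; lra.
have e5 : e <= 1 / 5.
  rewrite /e ler_pdivrMr; last lra.
  lra.
have hb : rho_hat R y r < rho r + e := hB' r nr.
move: p1 p2 p4 rhalf hb h1 h2.
move: (rho r) (rho_hat R y r) => p h p1 p2 p4 rhalf hb h1 h2.
set u := e / (1 - p).
have u0 : 0 <= u by rewrite /u; apply: divr_ge0; lra.
have u2 : u <= 2 * e by rewrite /u ler_pdivrMr; nra.
have hbern := @bernoulli_le R u k.
have hbk : 3 / 5 <= (1 - u) ^+ k.
  apply: le_trans (hbern _); first nra.
  apply/andP; split => //; lra.
have fact : (1 - p - e) = (1 - p) * (1 - u) by rewrite /u; field; lra.
have step1 : (1 - p - e) ^+ k <= (1 - h) ^+ k by apply: pow_le; lra.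
rewrite fact exprMn in step1.
have hp0 : 0 <= (1 - p) ^+ k by apply: exprn_ge0; lra.
have : 3 / 5 * (1 - p) ^+ k <= (1 - p) ^+ k * (1 - u) ^+ k.
  rewrite mulrC; apply: ler_wpM2l => //.
move=> h3.
have : 3 / 5 * (1 - p) ^+ k <= (1 - h) ^+ k by lra.
move=> h4.
have := ler_wpM2l h1 h4; lra.
Qed.
Lemma q_facts (R : realType) nR (rho : 'I_nR -> R) k r0 :
  (2 <= nR)%N -> (forall r, 0 < rho r) -> \sum_r rho r = 1 -> (1 <= k)%N ->
  (forall r, rho r <= rho r0) ->
  0 < \sum_r rho r * (1 - rho r) ^+ k /\
  (\sum_r rho r * (1 - rho r) ^+ k) / 2 <=
     \sum_r rho r * (if r == r0 then 0 else (1 - rho r) ^+ k).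
Proof.
move=> n2 hp hs k1 hmax.
have h0 : forall r, 0 <= rho r by move=> r; apply: ltW.
have hle1 : forall r, r != r0 -> rho r + rho r0 <= 1 by move=> r; apply: pair_le1.
have [s hs0] : exists s, s != r0.
  have : (1 < #|'I_nR|)%N by rewrite card_ord.
  case/card_gt1P => x [y [_ _ xy]].
  case: (eqVneq x r0) => [ex|nx]; last by exists x.
  by exists y; rewrite -ex eq_sym.
have m1 : rho r0 < 1.
  have := hle1 s hs0; have := hp s; lra.
have split1 : \sum_r rho r * (1 - rho r) ^+ k
    = (rho r0) * (1 - (rho r0)) ^+ k + \sum_r rho r * (if r == r0 then 0 else (1 - rho r) ^+ k).
  rewrite (bigD1 r0) //= [X in _ = _ + X](bigD1 r0) //= eqxx mulr0 add0r.
  congr (_ + _); apply: eq_bigr => r /negbTE ->; done.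
have rest_ge0 : 0 <= \sum_r rho r * (if r == r0 then 0 else (1 - rho r) ^+ k).
  apply: sumr_ge0 => r _; apply: mulr_ge0 => //.
  case: eqP => _ //; apply: exprn_ge0.
  have := hmax r; have := hp r; case: (eqVneq r r0) => [->|nr]; first lra.
  have := hle1 r nr; lra.
have t0 : 0 < (rho r0) * (1 - (rho r0)) ^+ k by apply: mulr_gt0; [exact: hp | apply: exprn_gt0; lra].
case: k k1 split1 rest_ge0 t0 => // k' _ split1 rest_ge0 t0.
have bound : (rho r0) * (1 - (rho r0)) ^+ k'.+1 <= \sum_r rho r * (if r == r0 then 0 else (1 - rho r) ^+ k'.+1).
  have -> : \sum_r rho r * (if r == r0 then 0 else (1 - rho r) ^+ k'.+1)
      = \sum_(r | r != r0) rho r * (1 - rho r) ^+ k'.+1.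
    rewrite (bigD1 r0) //= eqxx mulr0 add0r; apply: eq_bigr => r /negbTE -> //.
  have -> : (rho r0) * (1 - (rho r0)) ^+ k'.+1 = \sum_(r | r != r0) rho r * ((rho r0) * (1 - (rho r0)) ^+ k').
    rewrite -mulr_suml.
    have : \sum_r rho r = (rho r0) + \sum_(r | r != r0) rho r by rewrite (bigD1 r0).
    rewrite hs => e; have -> : \sum_(r | r != r0) rho r = 1 - (rho r0) by lra.
    rewrite exprS; ring.
  apply: ler_sum => r nr; apply: ler_wpM2l => //; rewrite exprS.
  have a1 := hle1 r nr; have a2 := hmax r; have a3 := h0 r0.
  apply: ler_pM.
  - lra.
  - apply: exprn_ge0; lra.
  - lra.
  - apply: pow_le; lra.
split; first lra.
lra.
Qed.
Lemma expN_ln (R : realType) (x t : R) : 0 < x -> ln x <= t -> expR (- t) <= x^-1.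
Proof.
move=> x0 h; have e : expR (ln x) = x by apply: lnK; rewrite posrE.
by rewrite -[in X in _ <= X]e -expRN ler_expR lerN2.
Qed.

Lemma numB (R : realType) (kr : R) : 1 <= kr ->
  - (1 / (10 * kr) * (1 / (5 * kr))) + (1 / (10 * kr)) ^+ 2 / (1 - 1 / (10 * kr))
    <= - (1 / (164 * kr ^+ 2)).
Proof.
move=> k1.
have x0 : 0 < 1 / kr by apply: divr_gt0; lra.
have x1 : 1 / kr <= 1 by rewrite ler_pdivrMr; lra.
have e1 : 1 / (10 * kr) = (1 / kr) / 10 by field; lra.
have e2 : 1 / (5 * kr) = (1 / kr) / 5 by field; lra.
have e3 : 1 / (164 * kr ^+ 2) = (1 / kr) ^+ 2 / 164 by field; lra.
rewrite e1 e2 e3.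
move: (1 / kr) x0 x1 => x x0 x1.
have h : (x / 10) ^+ 2 / (1 - x / 10) <= x ^+ 2 / 90.
  rewrite ler_pdivrMr; last lra.
  have : 0 <= x ^+ 2 by apply: sqr_ge0.
  rewrite expr2 /=. nra.
have : 0 <= x ^+ 2 by apply: sqr_ge0.
lra.
Qed.

Theorem mainTheorem5 (R : realType) (nR : nat) (rho : 'I_nR -> R) (k N : nat)
  (Delta : R) :
  (2 <= nR)%N ->
  (forall r, 0 < rho r) ->
  \sum_(r < nR) rho r = 1 ->
  (1 <= k)%N ->
  0 < Delta < 1 ->
  164 * (k%:R) ^+ 2 * ln (4 * nR%:R / Delta)
    + 100 * ln (2 / Delta) / (1 - tau_of k rho) <= N%:R ->
  1 - Delta <=
    Prob rho (fun y : {ffun 'I_N -> 'I_nR} =>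
      (1 - tau_of k rho) / 8 <= 1 - tau_of k (rho_hat R y)).
Proof.
move=> n2 hp hs k1 /andP[d0 d1] hN.
have h0 : forall r, 0 <= rho r by move=> r; apply: ltW.
have [r0 hmax] := @exists_max R nR rho (leq_trans (isT : (0 < 2)%N) n2).
have qe : 1 - tau_of k rho = \sum_r rho r * (1 - rho r) ^+ k by rewrite /tau_of; lra.
have [qpos qhalf] := @q_facts R nR rho k r0 n2 hp hs k1 hmax.
rewrite qe in hN *.
have kr : (1 : R) <= k%:R by rewrite ler1n.
have nr2 : (2 : R) <= nR%:R by rewrite ler_nat.
pose L1 := ln (4 * nR%:R / Delta).
pose L2 := ln (2 / Delta).
rewrite -/L1 -/L2 in hN.
have L1p : 0 < L1.
  rewrite /L1; apply: ln_gt0; rewrite ltr_pdivlMr //; lra.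
have L2p : 0 <= L2.
  rewrite /L2; apply: ln_ge0; rewrite ler_pdivlMr //; lra.
have kr2 : 1 <= k%:R ^+ 2 :> R by rewrite expr2; nra.
have t2 : 0 <= 100 * L2 / (\sum_r rho r * (1 - rho r) ^+ k).
  apply: divr_ge0; lra.
have hN1 : 164 * k%:R ^+ 2 * L1 <= N%:R by lra.
have hN2 : 100 * L2 / (\sum_r rho r * (1 - rho r) ^+ k) <= N%:R.
  have : 0 <= 164 * k%:R ^+ 2 * L1 by apply: mulr_ge0; lra.
  lra.
have Npos : (0 : R) < N%:R.
  have : 0 < 164 * k%:R ^+ 2 * L1 by apply: mulr_gt0; lra.
  lra.
set q := \sum_r rho r * (1 - rho r) ^+ k in qpos qhalf hN hN2 t2 *.
pose g := fun r => if r == r0 then 0 else (1 - rho r) ^+ k.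
pose q' := \sum_r rho r * g r.
pose th := q' / 2 - q / 100.
pose l : R := 1 / (10 * k%:R).
pose e : R := 1 / (5 * k%:R).
pose fA := fun r => th - g r.
pose fB := fun r s => l * (((s == r)%:R : R) - rho r - e).
pose A := fun y : {ffun 'I_N -> 'I_nR} => 0 <= \sum_(j < N) fA (y j).
pose B := fun r (y : {ffun 'I_N -> 'I_nR}) => 0 <= \sum_(j < N) fB r (y j).
have g01 : forall r, 0 <= g r <= 1.
  move=> r; rewrite /g; case: (eqVneq r r0) => [_|nr]; first lra.
  have := @pair_le1 R nR rho r r0 h0 hs nr; have := hp r; have := h0 r0 => ? ? ?.
  by apply/andP; split; [apply: exprn_ge0 | apply: exprn_ile1]; lra.
have PA : Prob rho A <= Delta / 2.
  apply: le_trans (@prob_exp R nR N rho fA h0) _.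
  apply: le_trans (_ : expR (- (q / 100)) ^+ N <= _).
    apply: pow_le; first by apply: sumr_ge0 => r _; apply: mulr_ge0 => //; apply: expR_ge0.
    have := @chernoffA R nR rho g th h0 hs g01.
    have -> : th - q' / 2 = - (q / 100) by rewrite /th; lra.
    done.
  rewrite -expRM_natl mulrN.
  have -> : Delta / 2 = (2 / Delta)^-1 by rewrite invf_div.
  apply: expN_ln; first by apply: divr_gt0; lra.
  move: hN2; rewrite -/L2 ler_pdivrMr // => h; lra.
have PB : forall r, Prob rho (B r) <= Delta / (4 * nR%:R).
  move=> r; apply: le_trans (@prob_exp R nR N rho (fB r) h0) _.
  apply: le_trans (_ : expR (- (1 / (164 * k%:R ^+ 2))) ^+ N <= _).
    apply: pow_le; first by apply: sumr_ge0 => s _; apply: mulr_ge0 => //; apply: expR_ge0.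
    apply: le_trans (@chernoffB R nR rho r l e h0 hs _) _.
      rewrite /l; apply/andP; split; first by apply: divr_ge0; lra.
      rewrite ltr_pdivrMr; lra.
    rewrite ler_expR; exact: numB.
  rewrite -expRM_natl mulrN.
  have -> : Delta / (4 * nR%:R) = (4 * nR%:R / Delta)^-1 by rewrite invf_div.
  apply: expN_ln; first by apply: divr_gt0; lra.
  rewrite -/L1 div1r ler_pdivlMr; last lra.
  lra.
have N0 : (0 < N)%N by rewrite -(ltr0n R).
pose E := fun y : {ffun 'I_N -> 'I_nR} => q / 8 <= 1 - tau_of k (rho_hat R y).
have hcov : forall y, ~~ E y -> A y || [exists r, B r y].
  move=> y; apply: contraNT; rewrite negb_or negb_exists => /andP[nA /forallP nB].
  have hA' : \sum_(j < N) fA (y j) < 0 by rewrite ltNge.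
  have hB' : forall r, r != r0 -> \sum_(j < N) fB r (y j) < 0.
    by move=> r _; rewrite ltNge; apply: nB.
  have := @det_step R nR N rho k r0 y th h0 hs hmax k1 N0 hA' hB'.
  have qh : q / 2 <= q' := qhalf.
  rewrite /E /tau_of /th => h.
  have -> : 1 - (1 - \sum_r rho_hat R y r * (1 - rho_hat R y r) ^+ k)
     = \sum_r rho_hat R y r * (1 - rho_hat R y r) ^+ k by lra.
  lra.
have ub := @union_bound R _ _ (sample_prob rho) E A B (fun y => @sample_prob_ge0 R nR N rho y h0) hcov.
have tot := @prob_total R nR N rho hs.
rewrite (bigID E) /= in tot.
have sB : \sum_r \sum_(y | B r y) sample_prob rho y <= Delta / 4.
  apply: le_trans (_ : \sum_(r < nR) (Delta / (4 * nR%:R)) <= _).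
    by apply: ler_sum => r _; apply: PB.
  rewrite eN.
  have -> : Delta / (4 * nR%:R) * nR%:R = Delta / 4 by field; rewrite pnatr_eq0 -lt0n; apply: leq_trans n2.
  done.
rewrite /Prob -/E.
have PA' : \sum_(y | A y) sample_prob rho y <= Delta / 2 := PA.
lra.
Qed.
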